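(* Let $\mathbb{F}$ be an algebraically closed field of characteristic different from $2$, and let $L$ be a nilpotent Lie algebra of finite dimension $n$ over $\mathbb{F}$ which is generalized Heisenberg of rank $3$ and satisfies $s(L)=5$. Then $n\le 7$.
   Context: A Lie algebra $L$ is generalized Heisenberg of rank $r$ if $L^{2}=Z(L)$ and $\dim L^{2}=r$. Schur multiplier: if $L\cong F/R$ with $F$ a free Lie algebra, then $\mathcal{M}(L)\cong (R\cap F^{2})/[R,F]$. For a non-abelian nilpotent Lie algebra $L$ of dimension $n$, $s(L)\ge0$ is defined by $\dim\mathcal{M}(L)=\frac12(n-1)(n-2)+1-s(L)$. *)

(* Defs.v *)
(* A finite-dimensional Lie algebra of dimension n over F is
   given by its structure constants with respect to a basis e_0..e_{n-1}:
   [e_i, e_j] = \sum_k c i j k e_k. *)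
From mathcomp Require Import all_boot all_order all_algebra.
Set Implicit Arguments. Unset Strict Implicit. Unset Printing Implicit Defensive.
Import GRing.Theory.
Local Open Scope ring_scope.

Definition is_lie_sc (F : fieldType) (n : nat) (c : 'I_n -> 'I_n -> 'I_n -> F) : Prop :=
  (forall i k, c i i k = 0) /\
  (forall i j k, c i j k = - c j i k) /\
  (forall i j l m,
     \sum_(k < n) (c i j k * c k l m + c j l k * c k i m + c l i k * c k j m) = 0).

Definition ebas (F : fieldType) (n : nat) (j : 'I_n) : 'rV[F]_n := delta_mx 0 j.

Definition lbr (F : fieldType) (n : nat) (c : 'I_n -> 'I_n -> 'I_n -> F)
  (u v : 'rV[F]_n) : 'rV[F]_n :=
  \row_m \sum_(i < n) \sum_(j < n) u 0 i * v 0 j * c i j m.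

(* lower central series: L^1 = L (index 0 here), L^{k+1} = [L^k, L] *)
Fixpoint lcs (F : fieldType) (n : nat) (c : 'I_n -> 'I_n -> 'I_n -> F) (k : nat)
  : 'M[F]_n :=
  match k with
  | 0 => 1%:M
  | k'.+1 => (\sum_(i < n) \sum_(j < n)
               <<lbr c (row i (lcs c k')) (ebas F j)>>)%MS
  end.

Definition lie_nilpotent (F : fieldType) (n : nat) (c : 'I_n -> 'I_n -> 'I_n -> F) : Prop :=
  exists k, \rank (lcs c k) = 0%N.

Definition derived (F : fieldType) (n : nat) (c : 'I_n -> 'I_n -> 'I_n -> F) : 'M[F]_n :=
  (\sum_(i < n) \sum_(j < n) <<lbr c (ebas F i) (ebas F j)>>)%MS.

Definition center (F : fieldType) (n : nat) (c : 'I_n -> 'I_n -> 'I_n -> F) : 'M[F]_n :=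
  (\bigcap_(j < n) kermx (lin1_mx (fun u : 'rV[F]_n => lbr c u (ebas F j))))%MS.

Definition gen_heisenberg (F : fieldType) (n : nat) (c : 'I_n -> 'I_n -> 'I_n -> F)
  (r : nat) : Prop :=
  (derived c == center c)%MS /\ \rank (derived c) = r.

(* ---- Schur multiplier, computed as H_2(L) = ker d2 / im d3 ----
   L (x) L is 'rV_(n*n) (via mxvec / vec_mx); Lambda^2 L = (L (x) L) / S with
   S spanned by the x (x) x.  Since S <= ker d2~, one gets
   dim H_2(L) = dim ker d2~ - dim (im d3~ + S). *)
Definition tens (F : fieldType) (n : nat) (u v : 'rV[F]_n) : 'rV[F]_(n * n) :=
  mxvec (u^T *m v).

Definition d2 (F : fieldType) (n : nat) (c : 'I_n -> 'I_n -> 'I_n -> F) : 'M[F]_(n * n, n) :=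
  lin1_mx (fun t : 'rV[F]_(n * n) =>
    \row_m \sum_(i < n) \sum_(j < n) (vec_mx t) i j * c i j m).

(* S = span { x (x) x } *)
Definition symsp (F : fieldType) (n : nat) : 'M[F]_(n * n) :=
  ((\sum_(i < n) <<mxvec (delta_mx i i : 'M[F]_n)>>) +
   (\sum_(i < n) \sum_(j < n) <<mxvec (delta_mx i j + delta_mx j i : 'M[F]_n)>>))%MS.

Definition im_d3 (F : fieldType) (n : nat) (c : 'I_n -> 'I_n -> 'I_n -> F) : 'M[F]_(n * n) :=
  (\sum_(i < n) \sum_(j < n) \sum_(l < n)
     <<tens (lbr c (ebas F i) (ebas F j)) (ebas F l)
       - tens (lbr c (ebas F i) (ebas F l)) (ebas F j)
       + tens (lbr c (ebas F j) (ebas F l)) (ebas F i)>>)%MS.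

Definition schur_dim (F : fieldType) (n : nat) (c : 'I_n -> 'I_n -> 'I_n -> F) : nat :=
  (\rank (kermx (d2 c)) - \rank (im_d3 c + symsp F n)%MS)%N.

Definition s_inv (F : fieldType) (n : nat) (c : 'I_n -> 'I_n -> 'I_n -> F) : int :=
  (((n.-1 * n.-2) %/ 2 + 1)%N)%:Z - (schur_dim c)%:Z.

(* Main.v *)
Require Import Defs.
From mathcomp Require Import all_boot all_order all_algebra.
From mathcomp Require Import ring zify.
From Stdlib Require Import Classical_Prop.
Set Implicit Arguments. Unset Strict Implicit. Unset Printing Implicit Defensive.
Import GRing.Theory.
Local Open Scope ring_scope.


Section Basic.
Variable F : fieldType.
Variable n : nat.
Variable c : 'I_n -> 'I_n -> 'I_n -> F.

Local Notation br := (lbr c).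
Definition ev (u : 'rV[F]_n) (a : 'cV[F]_n) : F := (u *m a) 0 0.
Definition D3 (u v w : 'rV[F]_n) : 'rV[F]_(n * n) :=
  tens (br u v) w - tens (br u w) v + tens (br v w) u.
Definition fv (a b : 'cV[F]_n) : 'cV[F]_(n * n) := (mxvec (a *m b^T - b *m a^T))^T.

Lemma br_linl k u v w : br (k *: u + v) w = k *: br u w + br v w.
Proof.
apply/rowP => m; rewrite !mxE mulr_sumr -big_split; apply: eq_bigr => i _.
rewrite mulr_sumr -big_split; apply: eq_bigr => j _; rewrite !mxE.
by rewrite !mulrDl !mulrA.
Qed.

Lemma br_linr k u v w : br u (k *: v + w) = k *: br u v + br u w.
Proof.
apply/rowP => m; rewrite !mxE mulr_sumr -big_split; apply: eq_bigr => i _.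
rewrite mulr_sumr -big_split; apply: eq_bigr => j _; rewrite !mxE.
rewrite !mulrDr !mulrDl; congr (_ + _); rewrite ?mulrA; try by rewrite (mulrC (u 0 i) k).
Qed.

Lemma ev_lin k u v a : ev (k *: u + v) a = k * ev u a + ev v a.
Proof. by rewrite /ev mulmxDl -scalemxAl !mxE. Qed.

Lemma tens_linl (k : F) (u v w : 'rV[F]_n) : tens (k *: u + v) w = k *: tens u w + tens v w.
Proof. by rewrite /tens linearD linearZ /= mulmxDl -scalemxAl linearD linearZ. Qed.

Lemma tens_linr (k : F) (u v w : 'rV[F]_n) : tens u (k *: v + w) = k *: tens u v + tens u w.
Proof. by rewrite /tens mulmxDr -scalemxAr linearD linearZ. Qed.

Lemma pair_tens (u v : 'rV[F]_n) (a b : 'cV[F]_n) :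
  (tens u v *m fv a b) 0 0 = ev u a * ev v b - ev u b * ev v a.
Proof.
rewrite /fv /tens mxvec_dotmul mulmxBr mulmxBl -!mulmxA -!trmx_mul !mulmxA !mxE !big_ord1 !mxE.
by rewrite /ev !mxE.
Qed.


Lemma lin_expand p q (f : 'rV[F]_n -> 'M[F]_(p, q)) :
  (forall k u v, f (k *: u + v) = k *: f u + f v) ->
  forall u, f u = \sum_(j < n) u 0 j *: f (ebas F j).
Proof.
move=> Hf.
have f0 : f 0 = 0.
  by have := Hf 1 0 0; rewrite !scale1r !addr0 => /esym/eqP; rewrite -subr_eq0 addrK => /eqP.
have fD u v : f (u + v) = f u + f v by have := Hf 1 u v; rewrite !scale1r.
have fZ k u : f (k *: u) = k *: f u by rewrite -[k *: u]addr0 Hf f0 addr0.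
move=> u; rewrite {1}(row_sum_delta u).
elim/big_rec2: _ => [|j x y _ Hxy]; first by rewrite f0.
by rewrite fD fZ Hxy.
Qed.

Lemma mul_lin1 (f : 'rV[F]_n -> 'rV[F]_n) :
  (forall k u v, f (k *: u + v) = k *: f u + f v) ->
  forall u, u *m lin1_mx f = f u.
Proof.
move=> Hf u; rewrite mulmx_sum_row (lin_expand Hf u); apply: eq_bigr => i _.
congr (_ *: _); apply/rowP => j; rewrite !mxE; done.
Qed.

Lemma br_e i j : br (ebas F i) (ebas F j) = \row_m c i j m.
Proof.
apply/rowP => m; rewrite !mxE (bigD1 i) //= [X in _ + X]big1 => [|i' Hi]; last first.
  by rewrite big1 // => j' _; rewrite /ebas !mxE (negbTE Hi) andbF !mul0r.
rewrite addr0 (bigD1 j) //= [X in _ + X]big1 => [|j' Hj]; last by rewrite /ebas !mxE (negbTE Hj) andbF !mulr0 mul0r.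
by rewrite /ebas !mxE !eqxx !mul1r !addr0.
Qed.

Lemma zACA3 (V : zmodType) (a1 a2 b1 b2 c1 c2 : V) :
  (a1 + a2) - (b1 + b2) + (c1 + c2) = (a1 - b1 + c1) + (a2 - b2 + c2).
Proof. by rewrite opprD (addrACA a1) (addrACA (a1 - b1)). Qed.

Lemma D3_linl k u u' v w : D3 (k *: u + u') v w = k *: D3 u v w + D3 u' v w.
Proof.
by rewrite /D3 !br_linl !tens_linl tens_linr zACA3 scalerDr scalerBr.
Qed.

Lemma D3_linm k u v v' w : D3 u (k *: v + v') w = k *: D3 u v w + D3 u v' w.
Proof.
by rewrite /D3 br_linr br_linl !tens_linl tens_linr zACA3 scalerDr scalerBr.
Qed.

Lemma D3_linr k u v w w' : D3 u v (k *: w + w') = k *: D3 u v w + D3 u v w'.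
Proof.
by rewrite /D3 !br_linr !tens_linl tens_linr zACA3 scalerDr scalerBr.
Qed.

End Basic.


Section Struct.
Variable F : fieldType.
Variable n : nat.
Variable c : 'I_n -> 'I_n -> 'I_n -> F.
Hypothesis Hlie : is_lie_sc c.
Hypothesis H2 : (2%:R : F) != 0.
Hypothesis Hgh : gen_heisenberg c 3.

Local Notation br := (lbr c).
Local Notation Z := (derived c).

Lemma br_anti u v : br u v = - br v u.
Proof.
case: Hlie => _ [Han _].
apply/rowP => m; rewrite !mxE exchange_big -sumrN; apply: eq_bigr => i _.
rewrite -sumrN; apply: eq_bigr => j _.
by rewrite (Han j i) mulrN (mulrC (u 0 j)).
Qed.
Lemma br_self u : br u u = 0.
Proof.
have : (2%:R : F) *: br u u = 0.
  by rewrite scaler_nat mulr2n {1}(br_anti u u) addNr.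
by move/eqP; rewrite scaler_eq0 (negbTE H2) /= => /eqP.
Qed.

Lemma brZ u v : (br u v <= Z)%MS.
Proof.
rewrite (lin_expand (f := fun u => br u v)); last by move=> *; apply: br_linl.
apply: summx_sub => i _; apply: scalemx_sub.
rewrite (lin_expand (f := fun v => br (ebas F i) v)); last by move=> *; apply: br_linr.
apply: summx_sub => j _; apply: scalemx_sub.
rewrite /derived; apply: (sumsmx_sup i) => //; apply: (sumsmx_sup j) => //.
by rewrite genmxE.
Qed.

Lemma centralL z v : (z <= Z)%MS -> br z v = 0.
Proof.
case: Hgh => /andP[HZC _] _ Hz.
have Hj j : br z (ebas F j) = 0.
  have := submx_trans Hz HZC; rewrite /center => /sub_bigcapmxP/(_ j isT).
  rewrite sub_kermx mul_lin1 ?(eqP) //; first by move/eqP.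
  by move=> *; apply: br_linl.
rewrite (lin_expand (f := fun v => br z v)); last by move=> *; apply: br_linr.
by apply: big1 => j _; rewrite Hj scaler0.
Qed.

Lemma centralR z v : (z <= Z)%MS -> br v z = 0.
Proof. by move=> Hz; rewrite br_anti centralL // oppr0. Qed.

Lemma cent_in a : (forall v, br a v = 0) -> (a <= Z)%MS.
Proof.
case: Hgh => /andP[_ HCZ] _ Ha; apply: submx_trans HCZ.
rewrite /center; apply/sub_bigcapmxP => j _.
rewrite sub_kermx mul_lin1 ?Ha //.
by move=> *; apply: br_linl.
Qed.

Lemma rankZ : \rank Z = 3%N.
Proof. by case: Hgh. Qed.

Lemma D3in u v w : (D3 c u v w <= im_d3 c)%MS.
Proof.
have H0 i j l : (D3 c (ebas F i) (ebas F j) (ebas F l) <= im_d3 c)%MS.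
  rewrite /im_d3; apply: (sumsmx_sup i) => //; apply: (sumsmx_sup j) => //.
  by apply: (sumsmx_sup l) => //; rewrite genmxE.
have H1 i j w' : (D3 c (ebas F i) (ebas F j) w' <= im_d3 c)%MS.
  rewrite (lin_expand (f := fun w => D3 c (ebas F i) (ebas F j) w)); last by move=> *; apply: D3_linr.
  by apply: summx_sub => l _; apply: scalemx_sub.
have H2' i v' w' : (D3 c (ebas F i) v' w' <= im_d3 c)%MS.
  rewrite (lin_expand (f := fun v => D3 c (ebas F i) v w')); last by move=> *; apply: D3_linm.
  by apply: summx_sub => l _; apply: scalemx_sub.
rewrite (lin_expand (f := fun u => D3 c u v w)); last by move=> *; apply: D3_linl.
by apply: summx_sub => l _; apply: scalemx_sub.
Qed.

End Struct.

Lemma mx11_eq0 (F : fieldType) (A : 'M[F]_1) : A 0 0 = 0 -> A = 0.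
Proof. by move=> H; apply/matrixP => i j; rewrite !ord1 H mxE. Qed.

Lemma tens_delta (F : fieldType) n (i j : 'I_n) :
  tens (ebas F i) (ebas F j) = mxvec (delta_mx i j).
Proof. by rewrite /tens /ebas trmx_delta mul_delta_mx. Qed.

Lemma symsp_fv (F : fieldType) n (a b : 'cV[F]_n) : (symsp F n <= kermx (fv a b))%MS.
Proof.
rewrite /symsp addsmx_sub; apply/andP; split.
  apply/sumsmx_subP => i _; rewrite genmxE sub_kermx -tens_delta.
  by apply/eqP/mx11_eq0; rewrite pair_tens mulrC subrr.
apply/sumsmx_subP => i _; apply/sumsmx_subP => j _; rewrite genmxE sub_kermx.
rewrite linearD /= -!tens_delta mulmxDl.
apply/eqP/mx11_eq0; rewrite mxE !pair_tens.
by rewrite [ev (ebas F j) a * _]mulrC [ev (ebas F j) b * _]mulrC addrC subrKA subrr.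
Qed.


Lemma rank_step (F : fieldType) N p k (S : 'M[F]_(p, N)) (e : 'I_k -> 'rV[F]_N) (g : 'I_k -> 'cV[F]_N) :
  (forall j, S *m g j = 0) -> (forall i j, (e i *m g j) 0 0 = (i == j)%:R) ->
  \rank (S + \matrix_(i < k) e i)%MS = (\rank S + k)%N.
Proof.
move=> HS He.
set X := \matrix_(i < k) e i.
pose G : 'M[F]_(N, k) := \matrix_(r, j) g j r 0.
have XG : X *m G = 1%:M.
  apply/matrixP => i j; rewrite !mxE -He mxE; apply: eq_bigr => r _; rewrite !mxE.
  by [].
have SG : S *m G = 0.
  apply/matrixP => a j; transitivity ((S *m g j) a 0); last by rewrite HS !mxE.
  by rewrite !mxE; apply: eq_bigr => r _; rewrite !mxE.
have rX : \rank X = k.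
  apply/eqP; rewrite eqn_leq rank_leq_row /=.
  by rewrite -{1}(mxrank1 F k) -XG mxrankM_maxl.
have cap0 : (S :&: X)%MS = 0.
  apply/eqP; rewrite -submx0; set Y := (S :&: X)%MS.
  have /submxP [D HD] : (Y <= X)%MS by apply: capmxSr.
  have /submxP [D' HD'] : (Y <= S)%MS by apply: capmxSl.
  have : Y *m G = 0 by rewrite HD' -mulmxA SG mulmx0.
  by rewrite {1}HD -mulmxA XG mulmx1 => HD0; rewrite HD HD0 mul0mx sub0mx.
have := mxrank_sum_cap S X; rewrite cap0 mxrank0 addn0 rX.
by [].
Qed.

Lemma rank_step1 (F : fieldType) N p (S : 'M[F]_(p, N)) (e : 'rV[F]_N) (g : 'cV[F]_N) :
  S *m g = 0 -> (e *m g) 0 0 != 0 ->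
  \rank (S + e)%MS = (\rank S + 1)%N.
Proof.
move=> HS He.
have -> : e = \matrix_(i < 1) e.
  by apply/matrixP => i j; rewrite !ord1 mxE.
apply: (rank_step (g := fun _ => ((e *m g) 0 0)^-1 *: g)).
  by move=> j; rewrite -scalemxAr HS scaler0.
move=> i j; rewrite !ord1 eqxx -scalemxAr mxE mulVf //.
Qed.


Lemma pair_delta (F : fieldType) n (M : 'M[F]_n) a b :
  (mxvec M *m (mxvec (delta_mx a b))^T) 0 0 = M a b.
Proof. by rewrite mxvec_delta trmx_delta -colE mxE mxvecE. Qed.

Lemma count_le n : ((\sum_(i < n) \sum_(j < n) ((i <= j)%N : nat)).*2 = n * n.+1)%N.
Proof.
have inner i : (i <= n)%N -> (\sum_(j < n) ((i <= j)%N : nat) = n - i)%N.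
  move=> Hi; rewrite -(big_mkord xpredT (fun j => ((i <= j)%N : nat))).
  rewrite (@big_cat_nat _ _ _ i 0 n) //= big_nat_cond big1 => [|j].
    rewrite add0n (eq_big_nat _ _ (F2 := fun _ => 1%N)) ?sum_nat_const_nat ?muln1 //.
    by move=> j /andP[-> _].
  by rewrite andbT => /andP[_ Hj]; rewrite leqNgt Hj.
rewrite (eq_bigr (fun i : 'I_n => n - i)%N); last by move=> i _; rewrite inner // ltnW.
rewrite -(big_mkord xpredT (fun i => n - i)%N).
clear inner; elim: n => [|n IH]; first by rewrite big_geq.
rewrite big_nat_recl // subn0.
rewrite (eq_big_nat _ _ (F2 := fun i => n - i)%N); last by move=> i _; rewrite subSS.
rewrite doubleD IH; lia.
Qed.

Lemma rank_symsp (F : fieldType) n : (n * n.+1 <= (\rank (symsp F n)).*2)%N.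
Proof.
set A := [set p : 'I_n * 'I_n | (p.1 <= p.2)%N].
have cardA : ((#|A|).*2 = n * n.+1)%N.
  rewrite -count_le -sum1_card big_mkcond /= pair_bigA /=.
  by congr (_.*2); apply: eq_bigr => p _; rewrite inE; case: (p.1 <= p.2)%N.
pose e (k : 'I_#|A|) : 'rV[F]_(n * n) := let p := enum_val k in
  if p.1 == p.2 then mxvec (delta_mx p.1 p.1) else mxvec (delta_mx p.1 p.2 + delta_mx p.2 p.1).
pose g (k : 'I_#|A|) : 'cV[F]_(n * n) := (mxvec (delta_mx (enum_val k).1 (enum_val k).2))^T.
have Hr : \rank ((0 : 'M[F]_(n * n)) + \matrix_(i < #|A|) e i)%MS = #|A|.
  transitivity (\rank ((0 : 'M[F]_(n * n))%R) + #|A|)%N; last by rewrite mxrank0.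
  apply: (rank_step (g := g)); first by move=> j; rewrite mul0mx.
  move=> i j.
  have Hp := enum_valP i; have Hq := enum_valP j; rewrite !inE in Hp Hq.
  rewrite -(inj_eq enum_val_inj) /e /g.
  case: (enum_val i) Hp => p1 p2 /= Hp; case: (enum_val j) Hq => q1 q2 /= Hq.
  rewrite xpair_eqE; case: (p1 =P p2) => [<-|Hne].
    by rewrite pair_delta !mxE eq_sym (eq_sym q2).
  rewrite pair_delta !mxE.
  have -> : (q1 == p2) && (q2 == p1) = false.
    apply/negP => /andP[/eqP E1 /eqP E2]; apply: Hne.
    by apply/val_inj/eqP; rewrite eqn_leq Hp /=; rewrite E1 E2 in Hq.
  by rewrite addr0 eq_sym (eq_sym q2).
rewrite -cardA leq_double -Hr; apply: mxrankS; rewrite addsmx_sub sub0mx /=.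
apply/row_subP => k; rewrite rowK /e.
case: (enum_val k) => p1 p2 /=; have [E|Hne] := eqVneq p1 p2.
  apply: submx_trans (addsmxSl _ _); apply: (sumsmx_sup p1) => //; by rewrite genmxE.
apply: submx_trans (addsmxSr _ _); apply: (sumsmx_sup p1) => //.
by apply: (sumsmx_sup p2) => //; rewrite genmxE.
Qed.


Section Lin.
Variable F : fieldType.

Lemma sep N p (v : 'rV[F]_N) (A : 'M[F]_(p, N)) :
  ~~ (v <= A)%MS -> exists g : 'cV_N, A *m g = 0 /\ (v *m g) 0 0 = 1.
Proof.
rewrite submxE => H; set w := v *m cokermx A.
have [j Hj] : exists j, w 0 j != 0.
  apply/existsP; apply: contraT => /existsPn Hn; move/negP: H => H; exfalso; apply: H.
  by apply/eqP/rowP => j0; rewrite [RHS]mxE; apply/eqP; move: (Hn j0); rewrite negbK.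
exists ((w 0 j)^-1 *: (cokermx A *m delta_mx j 0)); split.
  by rewrite -scalemxAr mulmxA mulmx_coker mul0mx scaler0.
by rewrite -scalemxAr mxE mulmxA -colE [col _ _ _ _]mxE mulVf.
Qed.

Lemma rank_add1 N p (A : 'M[F]_(p, N)) (v : 'rV[F]_N) :
  ~~ (v <= A)%MS -> \rank (A + v)%MS = (\rank A + 1)%N.
Proof.
case/sep => g [Ag vg]; apply: (rank_step1 (g := g)) => //.
by rewrite vg oner_neq0.
Qed.

Lemma rank_row1 N (v : 'rV[F]_N) : v != 0 -> \rank v = 1%N.
Proof.
move=> Hv; apply/eqP; rewrite eqn_leq rank_leq_row lt0n mxrank_eq0 Hv.
by [].
Qed.

Lemma rowfree_of N k (A : 'M[F]_(k, N)) :
  (forall r : 'rV_k, r *m A = 0 -> r = 0) -> row_free A.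
Proof.
move=> HA; rewrite /row_free.
have K0 : kermx A = 0.
  apply/row_matrixP => i; rewrite row0; apply: HA.
  by rewrite -row_mul mulmx_ker row0.
have := mxrank_ker A; rewrite K0 mxrank0 => /esym/eqP.
rewrite subn_eq0 => Hk; rewrite eqn_leq rank_leq_row Hk.
by [].
Qed.

Lemma dual_mx N k p (A : 'M[F]_(k, N)) (B : 'M[F]_(p, N)) :
  (forall r : 'rV_k, (r *m A <= B)%MS -> r = 0) ->
  exists H : 'M_(N, k), A *m H = 1%:M /\ B *m H = 0.
Proof.
move=> HA; set C := cokermx B.
have : row_free (A *m C).
  apply: rowfree_of => r Hr; apply: HA.
  by rewrite submxE -mulmxA Hr.
case/row_freeP => D HD; exists (C *m D); split.
  by rewrite mulmxA.
by rewrite mulmxA mulmx_coker mul0mx.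
Qed.

End Lin.


Section StepA.
Variable F : fieldType.
Variable n : nat.
Variable c : 'I_n -> 'I_n -> 'I_n -> F.
Hypothesis Hlie : is_lie_sc c.
Hypothesis H2 : (2%:R : F) != 0.
Hypothesis Hgh : gen_heisenberg c 3.
Hypothesis Hn : (4 <= n)%N.

Local Notation br := (lbr c).
Local Notation Z := (derived c).

Lemma br_addl u v w : br (u + v) w = br u w + br v w.
Proof. by have := br_linl c 1 u v w; rewrite !scale1r. Qed.

Lemma subN (N : nat) (a : 'rV[F]_N) p (B : 'M[F]_(p, N)) : (a <= B)%MS -> (- a <= B)%MS.
Proof. by move=> H; rewrite -scaleN1r scalemx_sub. Qed.

Lemma subNr (N : nat) (a b : 'rV[F]_N) : (a <= - b)%MS -> (a <= b)%MS.
Proof. by move=> H; apply: submx_trans H _; rewrite -scaleN1r scalemx_sub. Qed.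

Lemma outside p (Y : 'M[F]_(p, n)) : (\rank Y < 3)%N ->
  exists i j, ~~ (br (ebas F i) (ebas F j) <= Y)%MS.
Proof.
move=> HY; apply: NNPP => Hno.
have : (Z <= Y)%MS.
  apply/sumsmx_subP => i _; apply/sumsmx_subP => j _; rewrite genmxE.
  by case: (boolP (br (ebas F i) (ebas F j) <= Y)%MS) => // H; case: Hno; exists i, j.
by move/mxrankS; rewrite (rankZ Hgh) leqNgt HY.
Qed.

Lemma noncentral : exists x t, br x t != 0.
Proof.
have [i Hi] : exists i, ~~ (ebas F i <= Z)%MS.
  apply: NNPP => Hno.
  have : ((1%:M : 'M[F]_n) <= Z)%MS.
    apply/row_subP => i; rewrite row1.
    by case: (boolP (ebas F i <= Z)%MS) => // H; case: Hno; exists i.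
  by move/mxrankS; rewrite mxrank1 (rankZ Hgh) leqNgt (leq_trans _ Hn).
apply: NNPP => Hno; move/negP: Hi; apply; apply: (cent_in Hgh) => v.
by case: (boolP (br (ebas F i) v == 0)) => [/eqP //|H]; case: Hno; exists (ebas F i), v.
Qed.

Lemma inter0 (zx zy v : 'rV[F]_n) : ~~ (zy <= zx)%MS -> (v <= zx)%MS -> (v <= zy)%MS -> v = 0.
Proof.
move=> Hxy Hx /submxP [D HD].
have HD' : v = D 0 0 *: zy.
  by rewrite HD [in LHS](mx11_scalar D) mul_scalar_mx.
case: (eqVneq (D 0 0) 0) => HD0.
  by rewrite HD' HD0 scale0r.
move/negP: Hxy; case.
have -> : zy = (D 0 0)^-1 *: v by rewrite HD' scalerA mulVf // scale1r.
by rewrite scalemx_sub.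
Qed.

Lemma stepA : exists x u1 u2, br x u1 != 0 /\ ~~ (br x u2 <= br x u1)%MS.
Proof.
apply: NNPP => Hno.
have Dep a b d : br a b != 0 -> (br a d <= br a b)%MS.
  move=> Hab; case: (boolP (br a d <= br a b)%MS) => // H; case: Hno; exists a, b, d; split => //.
have [x [t Hxt]] := noncentral.
set zx := br x t.
have [i [j Hij]] : exists i j, ~~ (br (ebas F i) (ebas F j) <= zx)%MS.
  by apply: outside; rewrite (leq_ltn_trans (rank_leq_row _)).
set y := ebas F i; set w := ebas F j; set zy := br y w.
have Hzy : zy != 0.
  case: (eqVneq zy 0) => // E; move/negP: Hij; case; by rewrite -/y -/w -/zy E sub0mx.
have Htx : br t x != 0 by rewrite br_anti // oppr_eq0.
have Hwy : br w y != 0 by rewrite br_anti // oppr_eq0.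
have Eyt : br y t = 0.
  apply: (inter0 Hij); last exact: Dep.
  rewrite br_anti //; apply: subN; apply: subNr; rewrite -br_anti //; exact: Dep.
have Exw : br x w = 0.
  apply: (inter0 Hij); first exact: Dep.
  rewrite br_anti //; apply: subN; apply: subNr; rewrite -br_anti //; exact: Dep.
have H1 : br (x + y) t != 0 by rewrite br_addl Eyt addr0.
have := Dep _ _ w H1; rewrite !br_addl Eyt Exw add0r addr0.
by move=> H; move/negP: Hij.
Qed.

End StepA.


Lemma mul_col (F : fieldType) m k p (A : 'M[F]_(m, k)) (B : 'M[F]_(k, p)) j :
  A *m col j B = col j (A *m B).
Proof. by apply/matrixP => a b; rewrite !mxE; apply: eq_bigr => r _; rewrite !mxE. Qed.

Lemma entry_ev (F : fieldType) m N p (A : 'M[F]_(m, N)) (H : 'M[F]_(N, p)) a b :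
  (A *m H) a b = ev (row a A) (col b H).
Proof. by rewrite /ev !mxE; apply: eq_bigr => r _; rewrite !mxE. Qed.

Lemma ev_ann (F : fieldType) N p (a : 'rV[F]_N) (B : 'M[F]_(p, N)) g :
  (a <= B)%MS -> B *m g = 0 -> ev a g = 0.
Proof. by case/submxP => D -> Hg; rewrite /ev -mulmxA Hg mulmx0 mxE. Qed.

Lemma mx_ann (F : fieldType) N p q r (A : 'M[F]_(q, N)) (B : 'M[F]_(p, N)) (g : 'M[F]_(N, r)) :
  (A <= B)%MS -> B *m g = 0 -> A *m g = 0.
Proof. by case/submxP => D -> Hg; rewrite -mulmxA Hg mulmx0. Qed.

Lemma kerP1 (F : fieldType) N (e : 'rV[F]_N) (g : 'cV[F]_N) :
  (e *m g) 0 0 = 0 -> (e <= kermx g)%MS.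
Proof. by move=> H; rewrite sub_kermx; apply/eqP/mx11_eq0. Qed.

Lemma ker_add1 (F : fieldType) N p (S : 'M[F]_(p, N)) (e : 'rV[F]_N) (g : 'cV[F]_N) :
  (S <= kermx g)%MS -> (e *m g) 0 0 = 0 -> (S + e <= kermx g)%MS.
Proof. by move=> HS He; rewrite addsmx_sub HS kerP1. Qed.

Lemma ker_addf (F : fieldType) N p k (S : 'M[F]_(p, N)) (e : 'I_k -> 'rV[F]_N) (g : 'cV[F]_N) :
  (S <= kermx g)%MS -> (forall i, (e i *m g) 0 0 = 0) ->
  (S + \matrix_(i < k) e i <= kermx g)%MS.
Proof.
by move=> HS He; rewrite addsmx_sub HS /=; apply/row_subP => i; rewrite rowK kerP1.
Qed.

Lemma ev0 (F : fieldType) n (a : 'cV[F]_n) : ev 0 a = 0.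
Proof. by rewrite /ev mul0mx mxE. Qed.

Lemma tens0l (F : fieldType) n (v : 'rV[F]_n) : tens 0 v = 0.
Proof. by rewrite /tens trmx0 mul0mx linear0. Qed.

Lemma e00D (F : fieldType) (A B : 'M[F]_1) : (A + B) 0 0 = A 0 0 + B 0 0.
Proof. by rewrite mxE. Qed.
Lemma e00N (F : fieldType) (A : 'M[F]_1) : (- A) 0 0 = - A 0 0.
Proof. by rewrite mxE. Qed.

Section Main.
Variable F : fieldType.
Variable n : nat.
Variable c : 'I_n -> 'I_n -> 'I_n -> F.
Hypothesis Hlie : is_lie_sc c.
Hypothesis H2 : (2%:R : F) != 0.
Hypothesis Hgh : gen_heisenberg c 3.
Hypothesis Hn : (8 <= n)%N.

Local Notation br := (lbr c).
Local Notation Z := (derived c).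

Lemma evZ0 z b : (z <= Z)%MS -> Z *m b = 0 -> ev z b = 0.
Proof. exact: ev_ann. Qed.

Lemma pairD3 u v w a b : Z *m b = 0 ->
  (D3 c u v w *m fv a b) 0 0 =
  ev (br u v) a * ev w b - ev (br u w) a * ev v b + ev (br v w) a * ev u b.
Proof.
move=> Hb; rewrite /D3 !mulmxDl mulNmx !e00D e00N !pair_tens.
by rewrite !(evZ0 (brZ _ _ _) Hb) !mul0r !subr0.
Qed.

Lemma pairZ u v z a b : (z <= Z)%MS ->
  (D3 c u v z *m fv a b) 0 0 = ev (br u v) a * ev z b - ev (br u v) b * ev z a.
Proof.
move=> Hz; rewrite /D3 !(centralR Hlie Hgh _ Hz) !tens0l subr0 addr0.
by rewrite pair_tens.
Qed.

Lemma vanZ u v z a b : (z <= Z)%MS -> Z *m b = 0 -> (D3 c u v z *m fv a b) 0 0 = 0.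
Proof.
by move=> Hz Hb; rewrite pairZ // (evZ0 Hz Hb) (evZ0 (brZ _ _ _) Hb) !mul0r mulr0 subr0.
Qed.


Lemma zetas : exists x u1 u2 p q (z1 z2 z3 : 'cV[F]_n),
  [/\ [/\ ev (br x u1) z1 = 1, ev (br x u1) z2 = 0 & ev (br x u1) z3 = 0],
      [/\ ev (br x u2) z1 = 0, ev (br x u2) z2 = 1 & ev (br x u2) z3 = 0] &
      [/\ ev (br (ebas F p) (ebas F q)) z1 = 0, ev (br (ebas F p) (ebas F q)) z2 = 0 &
       ev (br (ebas F p) (ebas F q)) z3 = 1]].
Proof.
have [x [u1 [u2 [Hz1 Hz2]]]] := stepA Hlie Hgh (leq_trans (isT : (4 <= 8)%N) Hn).
have r1 : \rank (br x u1) = 1%N by apply: rank_row1.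
have r2 : (\rank (br x u2) <= 1)%N by apply: rank_leq_row.
have [p [q Hpq]] : exists p q, ~~ (br (ebas F p) (ebas F q) <= br x u1 + br x u2)%MS.
  apply: (outside Hgh); apply: leq_ltn_trans (mxrank_adds_leqif _ _) _.
  by rewrite r1; apply: leq_ltn_trans (leq_add (leqnn 1) r2) _.
set z1 := br x u1 in Hz1 Hz2 r1 r2 Hpq *; set z2 := br x u2 in Hz2 r2 Hpq *.
set z3 := br (ebas F p) (ebas F q) in Hpq *.
have r12 : \rank (z1 + z2)%MS = 2%N by rewrite rank_add1 // r1.
have r123 : \rank (z1 + z2 + z3)%MS = 3%N by rewrite rank_add1 // r12.
have le2 (a b : 'rV[F]_n) : (\rank (a + b)%MS <= 2)%N.
  apply: leq_trans (mxrank_adds_leqif _ _) _.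
  by rewrite -[2%N]/(1 + 1)%N; apply: leq_add; apply: rank_leq_row.
have N1 : ~~ (z1 <= z2 + z3)%MS.
  apply/negP => H; have := le2 z2 z3; rewrite leqNgt; move/negP; apply.
  apply: leq_trans (_ : (3 <= \rank (z1 + z2 + z3)%MS)%N) _; first by rewrite r123.
  apply: mxrankS.
  by rewrite !addsmx_sub H addsmxSl addsmxSr.
have N2 : ~~ (z2 <= z1 + z3)%MS.
  apply/negP => H; have := le2 z1 z3; rewrite leqNgt; move/negP; apply.
  apply: leq_trans (_ : (3 <= \rank (z1 + z2 + z3)%MS)%N) _; first by rewrite r123.
  apply: mxrankS.
  by rewrite !addsmx_sub H addsmxSl addsmxSr.
have [g1 [G1 E1]] := sep N1; have [g2 [G2 E2]] := sep N2; have [g3 [G3 E3]] := sep Hpq.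
exists x, u1, u2, p, q, g1, g2, g3.
rewrite -/z1 -/z2 -/z3.
have ann (a : 'rV[F]_n) p' (B : 'M[F]_(p', n)) g : (a <= B)%MS -> B *m g = 0 -> ev a g = 0.
  exact: ev_ann.
split; split => //; apply: ann; try eassumption;
  by rewrite ?addsmxSl ?addsmxSr.
Qed.


Lemma etas x u1 u2 (z1 z2 : 'cV[F]_n) :
  ev (br x u1) z1 = 1 -> ev (br x u1) z2 = 0 ->
  ev (br x u2) z1 = 0 -> ev (br x u2) z2 = 1 ->
  exists m (W : 'M[F]_(m, n)) (hu : 'cV[F]_n) (h : 'I_m -> 'cV[F]_n),
  [/\ (n - 6 <= m)%N,
      (forall j, ev (br x (row j W)) z1 = 0 /\ ev (br x (row j W)) z2 = 0),
      (forall g, g = hu \/ (exists j, g = h j) ->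
          [/\ Z *m g = 0, ev x g = 0 & ev u1 g = 0]),
      ev u2 hu = 1 /\ (forall i, ev (row i W) hu = 0) &
      (forall j, ev u2 (h j) = 0 /\ (forall i, ev (row i W) (h j) = (i == j)%:R))].
Proof.
move=> e11 e12 e21 e22.
pose f1 : 'cV[F]_n := lin1_mx (br x) *m z1.
pose f2 : 'cV[F]_n := lin1_mx (br x) *m z2.
have linx : forall k u v, br x (k *: u + v) = k *: br x u + br x v by move=> *; apply: br_linr.
have ef1 v : ev v f1 = ev (br x v) z1 by rewrite /ev /f1 mulmxA mul_lin1.
have ef2 v : ev v f2 = ev (br x v) z2 by rewrite /ev /f2 mulmxA mul_lin1.
set K := (kermx f1 :&: kermx f2)%MS.
set Y0 := (Z + x)%MS.
have Zf v : (v <= Z)%MS -> ev v f1 = 0 /\ ev v f2 = 0.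
  by move=> Hv; rewrite ef1 ef2 (centralR Hlie Hgh _ Hv) !ev0.
have xf : ev x f1 = 0 /\ ev x f2 = 0 by rewrite ef1 ef2 (br_self Hlie H2) !ev0.
have Y0K : (Y0 <= K)%MS.
  rewrite sub_capmx !addsmx_sub; apply/andP; split; apply/andP; split.
  - by apply/row_subP => i; apply: kerP1; exact: (proj1 (Zf _ (row_sub _ _))).
  - by apply: kerP1; exact: (proj1 xf).
  - by apply/row_subP => i; apply: kerP1; exact: (proj2 (Zf _ (row_sub _ _))).
  - by apply: kerP1; exact: (proj2 xf).
have rK : (n - 2 <= \rank K)%N.
  have := mxrank_sum_cap (kermx f1) (kermx f2); rewrite !mxrank_ker.
  have := rank_leq_col f1; have := rank_leq_col f2.
  have := rank_leq_col (kermx f1 + kermx f2)%MS; rewrite /K; lia.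
have rY0 : (\rank Y0 <= 4)%N.
  apply: leq_trans (mxrank_adds_leqif _ _) _.
  by have := rank_leq_row x; rewrite (rankZ Hgh); lia.
set D := (K :\: Y0)%MS.
set m := \rank D.
have rD : (n - 6 <= m)%N.
  have := mxrank_cap_compl K Y0; rewrite -/D -/m.
  have := mxrankS (capmxSr K Y0); lia.
set W := row_base D.
have WD : (W :=: D)%MS by apply: eq_row_base.
have Wfree : row_free W by apply: row_base_free.
clearbody W.
have WK : (W <= K)%MS by rewrite WD diffmxSl.
have Wf1 j : ev (row j W) f1 = 0.
  have : (row j W <= kermx f1)%MS.
    by apply: submx_trans (row_sub j W) (submx_trans WK (capmxSl _ _)).
  by rewrite sub_kermx => /eqP; rewrite /ev => ->; rewrite mxE.
have Wf2 j : ev (row j W) f2 = 0.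
  have : (row j W <= kermx f2)%MS.
    by apply: submx_trans (row_sub j W) (submx_trans WK (capmxSr _ _)).
  by rewrite sub_kermx => /eqP; rewrite /ev => ->; rewrite mxE.
have Wk1 : W *m f1 = 0.
  by apply/eqP; rewrite -sub_kermx (submx_trans WK (capmxSl _ _)).
have Wk2 : W *m f2 = 0.
  by apply/eqP; rewrite -sub_kermx (submx_trans WK (capmxSr _ _)).
have Y0k1 : Y0 *m f1 = 0.
  by apply/eqP; rewrite -sub_kermx (submx_trans Y0K (capmxSl _ _)).
have Y0k2 : Y0 *m f2 = 0.
  by apply/eqP; rewrite -sub_kermx (submx_trans Y0K (capmxSr _ _)).
have one11 (v : 'rV[F]_n) g : ev v g = 1 -> v *m g = 1%:M.
  by move=> Hv; apply/matrixP => i j; rewrite !ord1 [RHS]mxE eqxx mulr1n; exact: Hv.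
have zero11 (v : 'rV[F]_n) g : ev v g = 0 -> v *m g = 0.
  by move=> Hv; apply/mx11_eq0.
have u1f1 : u1 *m f1 = 1%:M by apply: one11; rewrite ef1.
have u1f2 : u1 *m f2 = 0 by apply: zero11; rewrite ef2.
have u2f2 : u2 *m f2 = 1%:M by apply: one11; rewrite ef2.
set A := col_mx u2 W.
set B := (Y0 + u1)%MS.
have Bf2 : B *m f2 = 0.
  apply/eqP; rewrite -sub_kermx addsmx_sub.
  by rewrite (submx_trans Y0K (capmxSr _ _)) sub_kermx u1f2 eqxx.
have indep : forall r : 'rV_(1 + m), (r *m A <= B)%MS -> r = 0.
  move=> r Hr; have Hy2 := mx_ann Hr Bf2.
  move: Hr Hy2; rewrite -[r]hsubmxK /A mul_row_col mulmxDl -!mulmxA u2f2 Wk2 mulmx0 addr0 mulmx1.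
  move=> Hr Ht; rewrite Ht mul0mx add0r in Hr.
  case/sub_addsmxP: Hr => [[a b] /= Hab].
  have : (rsubmx r *m W) *m f1 = 0 by rewrite -mulmxA Wk1 mulmx0.
  rewrite Hab mulmxDl -!mulmxA Y0k1 u1f1 mulmx0 add0r mulmx1 => Hb.
  rewrite Hb mul0mx addr0 in Hab.
  have H0 : rsubmx r *m W = 0.
    apply/eqP; rewrite -submx0 -(capmx_diff K Y0) -/D sub_capmx.
    by rewrite -WD submxMl Hab submxMl.
  have : rsubmx r = 0.
    by apply: (row_free_inj Wfree); rewrite H0 mul0mx.
  by move=> ->; rewrite Ht row_mx0.
have [H [AH BH]] := dual_mx indep.
exists m, W, (col (lshift m 0) H), (fun j => col (rshift 1 j) H).
have BHc k : B *m col k H = 0 by rewrite mul_col BH; apply/matrixP => i j; rewrite !mxE.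
have rowV (v : 'rV[F]_n) i : row i v = v by apply/rowP => j; rewrite mxE ord1.
have AHe i j : ev (row i A) (col j H) = (i == j)%:R by rewrite -entry_ev AH mxE.
split.
- exact: rD.
- by move=> j; rewrite -ef1 -ef2 Wf1 Wf2.
- move=> g Hg.
  have [k Hk] : exists k, g = col k H by case: Hg => [->|[j ->]]; eexists.
  rewrite Hk; split.
  + by apply: mx_ann (BHc k); rewrite /B /Y0 -addsmxA addsmxSl.
  + by apply: ev_ann (BHc k); rewrite /B /Y0 addsmxC addsmxA addsmxSr.
  + by apply: ev_ann (BHc k); rewrite /B addsmxSr.
- split.
  + by have := AHe (lshift m 0) (lshift m 0); rewrite /A rowKu rowV eqxx.
  + by move=> i; have := AHe (rshift 1 i) (lshift m 0); rewrite /A rowKd eq_rlshift.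
- move=> j; split.
  + by have := AHe (lshift m 0) (rshift 1 j); rewrite /A rowKu rowV eq_lrshift.
  + by move=> i; have := AHe (rshift 1 i) (rshift 1 j); rewrite /A rowKd eq_rshift.
Qed.


Lemma step1k N p (S : 'M[F]_(p, N)) (e : 'rV[F]_N) (g : 'cV[F]_N) :
  (S <= kermx g)%MS -> (e *m g) 0 0 != 0 -> \rank (S + e)%MS = (\rank S + 1)%N.
Proof. by move=> HS He; apply: (rank_step1 (g := g)) => //; apply/eqP; rewrite -sub_kermx. Qed.

Lemma stepfk N p k (S : 'M[F]_(p, N)) (e : 'I_k -> 'rV[F]_N) (g : 'I_k -> 'cV[F]_N) :
  (forall j, S <= kermx (g j))%MS -> (forall i j, (e i *m g j) 0 0 = (i == j)%:R) ->
  \rank (S + \matrix_(i < k) e i)%MS = (\rank S + k)%N.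
Proof. by move=> HS He; apply: (rank_step (g := g)) => // j; apply/eqP; rewrite -sub_kermx. Qed.

Ltac simp := rewrite ?(mul1r, mulr1, mul0r, mulr0, subr0, sub0r, addr0, add0r, oppr0).

Lemma main_rank : (\rank (symsp F n) + n + 1 <= \rank (im_d3 c + symsp F n))%N.
Proof.
have [x [u1 [u2 [p [q [z1 [z2 [z3 [[e11 e12 e13] [e21 e22 e23] [e31 e32 e33]]]]]]]]]] := zetas.
have [m [W [hu [h [Hm HW Hg [Hu2 HuW] Hh]]]]] := etas e11 e12 e21 e22.
have [Zu xu u1u] := Hg hu (or_introl erefl).
have Hgj j := Hg (h j) (or_intror (ex_intro _ j erefl)).
set T := (im_d3 c + symsp F n)%MS.
have DT u v w : (D3 c u v w <= T)%MS by exact: submx_trans (D3in c u v w) (addsmxSl _ _).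
have Zx2 : (br x u2 <= Z)%MS by apply: brZ.
have Zpq : (br (ebas F p) (ebas F q) <= Z)%MS by apply: brZ.
set S0 := symsp F n.
set E12 := D3 c x u1 (br x u2).
set E13 := D3 c x u1 (br (ebas F p) (ebas F q)).
set E23 := D3 c x u2 (br (ebas F p) (ebas F q)).
set a0 := D3 c x u1 u2.
set XA := \matrix_(j < m) D3 c x u1 (row j W).
set XB := \matrix_(j < m) D3 c x u2 (row j W).
set S1 := (S0 + E12)%MS.
set S2 := (S1 + E13)%MS.
set S3 := (S2 + E23)%MS.
set S4 := (S3 + a0)%MS.
set S5 := (S4 + XA)%MS.
set S6 := (S5 + XB)%MS.
have kE (g : 'cV[F]_n) a : Z *m g = 0 -> (S3 <= kermx (fv a g))%MS.
  move=> Hz; apply: ker_add1; last exact: vanZ.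
  apply: ker_add1; last exact: vanZ.
  apply: ker_add1; last exact: vanZ.
  exact: symsp_fv.
have r1 : \rank S1 = (\rank S0 + 1)%N.
  apply: (step1k (g := fv z1 z2)); first exact: symsp_fv.
  by rewrite pairZ // e11 e22 e12 e21; simp; apply: oner_neq0.
have r2 : \rank S2 = (\rank S1 + 1)%N.
  apply: (step1k (g := fv z1 z3)).
    apply: ker_add1; first exact: symsp_fv.
    by rewrite pairZ // e11 e23 e13 e21; simp.
  by rewrite pairZ // e11 e33 e13 e31; simp; apply: oner_neq0.
have r3 : \rank S3 = (\rank S2 + 1)%N.
  apply: (step1k (g := fv z2 z3)).
    apply: ker_add1; first apply: ker_add1; first exact: symsp_fv.
      by rewrite pairZ // e12 e23 e13 e22; simp.
    by rewrite pairZ // e12 e33 e13 e32; simp.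
  by rewrite pairZ // e22 e33 e23 e32; simp; apply: oner_neq0.
have r4 : \rank S4 = (\rank S3 + 1)%N.
  apply: (step1k (g := fv z1 hu)); first exact: kE.
  by rewrite pairD3 // e11 Hu2 e21 u1u xu; simp; apply: oner_neq0.
have r5 : \rank S5 = (\rank S4 + m)%N.
  apply: (stepfk (g := fun j => fv z1 (h j))).
    move=> j; have [Zj xj u1j] := Hgj j; have [u2j _] := Hh j.
    apply: ker_add1; first exact: kE.
    by rewrite pairD3 // e11 u2j e21 u1j xj; simp.
  move=> i j; have [Zj xj u1j] := Hgj j; have [_ Wj] := Hh j.
  by rewrite pairD3 // e11 Wj (proj1 (HW i)) u1j xj; simp.
have r6 : \rank S6 = (\rank S5 + m)%N.
  apply: (stepfk (g := fun j => fv z2 (h j))).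
    move=> j; have [Zj xj u1j] := Hgj j; have [u2j Wj] := Hh j.
    apply: ker_addf.
      apply: ker_add1; first exact: kE.
      by rewrite pairD3 // e12 u2j e22 u1j xj; simp.
    by move=> i; rewrite pairD3 // e12 (proj2 (HW i)) u1j xj; simp.
  move=> i j; have [Zj xj u1j] := Hgj j; have [u2j Wj] := Hh j.
  by rewrite pairD3 // e22 Wj (proj2 (HW i)) u2j xj; simp.
have S6T : (S6 <= T)%MS.
  have S0T : (S0 <= T)%MS by exact: addsmxSr.
  rewrite /S6 addsmx_sub; apply/andP; split; last by apply/row_subP => i; rewrite rowK DT.
  rewrite /S5 addsmx_sub; apply/andP; split; last by apply/row_subP => i; rewrite rowK DT.
  rewrite /S4 addsmx_sub DT andbT /S3 addsmx_sub DT andbT /S2 addsmx_sub DT andbT.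
  by rewrite /S1 addsmx_sub DT andbT.
have [cc [gc [Hc [Hk Hv]]]] : exists (cc : 'rV[F]_(n * n)) (gc : 'cV[F]_(n * n)),
    [/\ (cc <= T)%MS, (S6 <= kermx gc)%MS & (cc *m gc) 0 0 != 0].
  case: (boolP [exists k : 'I_m, ev (br x (row k W)) z3 != 0]) => [/existsP [k Hk0] | /existsPn HB].
  - have m2 : (1 < m)%N by lia.
    have ltl : ((if (k : nat) == 0%N then 1 else 0) < m)%N by case: ifP => _; lia.
    pose l : 'I_m := Ordinal ltl.
    have vl : (l : nat) = (if (k : nat) == 0%N then 1 else 0)%N by [].
    have Hkl : (k == l) = false.
      apply/negP => /eqP E; move: vl; rewrite -E; case: ifP => /eqP; lia.
    exists (D3 c x (row k W) (row l W)), (fv z3 (h l)).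
    have [Zl xl u1l] := Hgj l; have [u2l Wl] := Hh l.
    split; first exact: DT.
    + apply: ker_addf; first apply: ker_addf; first apply: ker_add1; first exact: kE.
      * by rewrite pairD3 // e13 u2l e23 u1l xl; simp.
      * by move=> i; rewrite pairD3 // e13 u1l xl; simp.
      * by move=> i; rewrite pairD3 // e23 u2l xl; simp.
    + by rewrite pairD3 // !Wl eqxx Hkl xl; simp.
  - have HB' k : ev (br x (row k W)) z3 = 0 by apply/eqP; move: (HB k); rewrite negbK.
    set Bp := (Z + x + ebas F p + ebas F q)%MS.
    have rB : (\rank Bp <= 6)%N.
      rewrite /Bp; apply: leq_trans (mxrank_adds_leqif _ _) _.
      apply: leq_trans (leq_add (mxrank_adds_leqif _ _) (leqnn _)) _.
      apply: leq_trans (leq_add (leq_add (mxrank_adds_leqif _ _) (leqnn _)) (leqnn _)) _.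
      rewrite (rankZ Hgh).
      have := rank_leq_row x; have := rank_leq_row (ebas F p); have := rank_leq_row (ebas F q).
      lia.
    have [i Hi] : exists i, ~~ (ebas F i <= Bp)%MS.
      apply: NNPP => Hno.
      have : ((1%:M : 'M[F]_n) <= Bp)%MS.
        apply/row_subP => i; rewrite row1.
        by case: (boolP (ebas F i <= Bp)%MS) => // H; case: Hno; exists i.
      move/mxrankS; rewrite mxrank1; lia.
    have [eta [Beta Ieta]] := sep Hi.
    have Ie : ev (ebas F i) eta = 1 by exact: Ieta.
    have Ze : Z *m eta = 0 by apply: mx_ann Beta; rewrite /Bp -!addsmxA addsmxSl.
    have xe : ev x eta = 0.
      by apply: ev_ann Beta; rewrite /Bp -!addsmxA (addsmxC Z) -!addsmxA addsmxSl.
    have pe : ev (ebas F p) eta = 0.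
      by apply: ev_ann Beta; rewrite /Bp (addsmxC _ (ebas F p)) -!addsmxA addsmxSl.
    have qe : ev (ebas F q) eta = 0 by apply: ev_ann Beta; rewrite /Bp addsmxSr.
    exists (D3 c (ebas F p) (ebas F q) (ebas F i)), (fv z3 eta).
    split; first exact: DT.
    + apply: ker_addf; first apply: ker_addf; first apply: ker_add1; first exact: kE.
      * by rewrite pairD3 // e13 e23 xe; simp.
      * by move=> j; rewrite pairD3 // e13 HB' xe; simp.
      * by move=> j; rewrite pairD3 // e23 HB' xe; simp.
    + by rewrite pairD3 // e33 Ie qe pe; simp; apply: oner_neq0.
have r7 := step1k Hk Hv.
have : (\rank (S6 + cc)%MS <= \rank T)%N by apply: mxrankS; rewrite addsmx_sub S6T Hc.
rewrite r7 r6 r5 r4 r3 r2 r1 -/S0; lia.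
Qed.

End Main.


Lemma derived_d2 (F : fieldType) n (c : 'I_n -> 'I_n -> 'I_n -> F) :
  (derived c <= d2 c)%MS.
Proof.
pose f := fun t : 'rV[F]_(n * n) => \row_m \sum_(i < n) \sum_(j < n) (vec_mx t) i j * c i j m.
have lin : forall k u v, f (k *: u + v) = k *: f u + f v.
  move=> k u v; apply/rowP => m; rewrite !mxE mulr_sumr -big_split; apply: eq_bigr => i _.
  rewrite mulr_sumr -big_split; apply: eq_bigr => j _.
  by rewrite linearP !mxE mulrDl mulrA.
have ft u v : f (tens u v) = lbr c u v.
  apply/rowP => m; rewrite !mxE /tens mxvecK; apply: eq_bigr => i _.
  by apply: eq_bigr => j _; rewrite !mxE big_ord1 !mxE.
have md2 t : t *m d2 c = f t.
  rewrite /d2 mulmx_sum_row (lin_expand lin t); apply: eq_bigr => i _.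
  by congr (_ *: _); apply/rowP => j; rewrite !mxE.
apply/sumsmx_subP => i _; apply/sumsmx_subP => j _; rewrite genmxE.
by rewrite -ft -md2 submxMl.
Qed.

Lemma pchar2 (F : fieldType) : (2 \notin [pchar F])%N -> (2%:R : F) != 0.
Proof. by rewrite inE /=. Qed.

Lemma nn_eq n : (7 < n)%N -> ((n.-1 * n.-2) = n * n - 3 * n + 2)%N.
Proof. by case: n => // [[|[|n]]] //= _; nia. Qed.

Theorem lemma2p8 (F : closedFieldType) (n : nat)
  (c : 'I_n -> 'I_n -> 'I_n -> F) :
  (2 \notin [pchar F])%N ->
  is_lie_sc c ->
  lie_nilpotent c ->
  gen_heisenberg c 3 ->
  s_inv c = 5 ->
  (n <= 7)%N.
Proof.
move=> Hc Hlie _ Hgh Hs; rewrite leqNgt; apply/negP => Hn.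
have H2 := pchar2 Hc.
have HT := main_rank Hlie H2 Hgh Hn.
have HS := rank_symsp F n.
have Hd2 : (3 <= \rank (d2 c))%N by rewrite -(rankZ Hgh) mxrankS // derived_d2.
have Hd2' := rank_leq_col (d2 c).
have Hk := mxrank_ker (d2 c).
move: Hs; rewrite /s_inv /schur_dim => /eqP.
rewrite subr_eq => /eqP; rewrite -PoszD => /eqP; rewrite eqz_nat => /eqP Hs.
have Hnn := nn_eq Hn.
rewrite mulnS in HS; lia.
Qed.
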